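(* Let $X,Y$ be separable Banach spaces, $S:X\to X$ and $T:Y\to Y$ bounded invertible linear operators, and $\Pi:X\to Y$ a bounded linear surjection with $\Pi\circ S=T\circ\Pi$. Then: (1) if $S$ has the shadowing property, then $T$ has the shadowing property. If moreover $\Pi$ admits a strong bounded selector, then: (2) if $S$ is expansive, then $T$ is expansive; (3) if $S$ is uniformly expansive, then $T$ is uniformly expansive.
   Context: $\Pi$ admits a strong bounded selector if there is $L\ge1$ such that for every $y\in Y$ there exists $x\in\Pi^{-1}(y)$ with $\|S^n x\|\le L\|T^n y\|$ and $\|T^n y\|\le L\|S^nx\|$ for all $n\in\mathbb Z$. An invertible operator $T$ is expansive if for each $x$ with $\|x\|=1$ there is $n\in\mathbb Z$ with $\|T^nx\|\ge2$; uniformly expansive if there is $n\in\mathbb N$ such that every $z$ with $\|z\|=1$ satisfies $\|T^nz\|\ge2$ or $\|T^{-n}z\|\ge2$; it has the shadowing property if there is $K>0$ such that for every bounded sequence $(z_n)_{n\in\mathbb Z}$ there is a sequence $(y_n)_{n\in\mathbb Z}$ with $\sup_n\|y_n\|\le K\sup_n\|z_n\|$ and $y_{n+1}=Ty_n+z_n$ for all $n\in\mathbb Z$. *)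

(* Defs.v *)
From HB Require Import structures.
From mathcomp Require Import all_boot all_order all_algebra.
From mathcomp Require Import all_classical all_reals all_analysis.
Set Implicit Arguments. Unset Strict Implicit. Unset Printing Implicit Defensive.
Import Order.TTheory GRing.Theory Num.Theory.
Import numFieldNormedType.Exports.
Local Open Scope classical_set_scope.
Local Open Scope ring_scope.

Definition separable (T : topologicalType) : Prop :=
  exists D : set T, countable D /\ closure D = setT.

Definition zpow (V : Type) (f finv : V -> V) (n : int) : V -> V :=
  match n with
  | Posz k => iter k f
  | Negz k => iter k.+1 finv
  end.

Definition shadowing (R : realType) (V : normedModType R) (T : V -> V) : Prop :=
  exists K : R, 0 < K /\
    forall z : int -> V,
      has_ubound (range (fun n => `|z n|)) ->
      exists y : int -> V,
        has_ubound (range (fun n => `|y n|)) /\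
        sup (range (fun n => `|y n|)) <= K * sup (range (fun n => `|z n|)) /\
        (forall n : int, y (n + 1) = T (y n) + z n).

Definition expansive (R : realType) (V : normedModType R) (T Tinv : V -> V) : Prop :=
  forall x : V, `|x| = 1 -> exists n : int, 2 <= `|zpow T Tinv n x|.

Definition unif_expansive (R : realType) (V : normedModType R) (T Tinv : V -> V) : Prop :=
  exists n : nat, forall z : V, `|z| = 1 ->
    2 <= `|iter n T z| \/ 2 <= `|iter n Tinv z|.

Definition strong_bounded_selector (R : realType) (X Y : normedModType R)
    (S Sinv : X -> X) (T Tinv : Y -> Y) (Pi : X -> Y) : Prop :=
  exists L : R, 1 <= L /\
    forall y : Y, exists x : X, Pi x = y /\
      forall n : int,
        `|zpow S Sinv n x| <= L * `|zpow T Tinv n y| /\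
        `|zpow T Tinv n y| <= L * `|zpow S Sinv n x|.

(* Main.v *)
Require Import Defs.
From HB Require Import structures.
From mathcomp Require Import all_boot all_order all_algebra.
From mathcomp Require Import all_classical all_reals all_analysis.
Import Order.TTheory GRing.Theory Num.Theory.
Import numFieldNormedType.Exports.
Local Open Scope classical_set_scope.
Local Open Scope ring_scope.
From mathcomp Require Import zify ring lra.
Section Zpow.
Variable (V : Type) (f finv : V -> V).
Hypothesis (hK : cancel f finv) (hK' : cancel finv f).

Lemma zpow_add1 (n : int) x : zpow f finv (n + 1) x = f (zpow f finv n x).
Proof.
case: n => [k|[|j]].
- by rewrite -PoszD addn1.
- by rewrite NegzE addNr /= hK'.
- have -> : Negz j.+1 + 1 = Negz j by rewrite !NegzE; lia.
  by rewrite /= hK'.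
Qed.

Lemma zpow_sub1 (n : int) x : zpow f finv (n - 1) x = finv (zpow f finv n x).
Proof.
have := zpow_add1 (n - 1) x; rewrite subrK => ->; by rewrite hK.
Qed.

Lemma zpow_add (m n : int) x : zpow f finv (m + n) x = zpow f finv m (zpow f finv n x).
Proof.
case: m => [k|k].
- elim: k => [|k IH]; first by rewrite add0r.
  have -> : Posz k.+1 + n = (Posz k + n) + 1 by lia.
  by rewrite zpow_add1 IH.
- elim: k => [|k IH].
  + have -> : Negz 0 + n = n - 1 by rewrite NegzE; lia.
    by rewrite zpow_sub1.
  + have -> : Negz k.+1 + n = (Negz k + n) - 1 by rewrite !NegzE; lia.
    by rewrite zpow_sub1 IH.
Qed.

Lemma zpowN (n : nat) x : zpow f finv (- (n%:Z)) x = iter n finv x.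
Proof. by case: n => [|n] //=; rewrite -NegzE. Qed.
End Zpow.
Arguments zpow_add {V f finv}.
Arguments zpowN {V f finv}.


Section Scale.
Variables (R : realType) (V : normedModType R).

Lemma iter_scale (g : V -> V) (hg : forall (a : R) x, g (a *: x) = a *: g x) n a x :
  iter n g (a *: x) = a *: iter n g x.
Proof. by elim: n => [|n IH] //=; rewrite IH hg. Qed.

Lemma zpow_scale (f finv : V -> V) (hf : forall (a : R) x, f (a *: x) = a *: f x)
  (hfi : forall (a : R) x, finv (a *: x) = a *: finv x) n a x :
  zpow f finv n (a *: x) = a *: zpow f finv n x.
Proof. by case: n => k /=; rewrite iter_scale. Qed.

Lemma inv_scale (S : {linear V -> V}) (Sinv : V -> V) (hK : cancel S Sinv)
  (hK' : cancel Sinv S) (a : R) x : Sinv (a *: x) = a *: Sinv x.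
Proof. by apply: (can_inj hK); rewrite linearZ /= !hK'. Qed.

Lemma unit_scale (x : V) : x != 0 -> `| `|x|^-1 *: x| = 1.
Proof.
move=> x0; rewrite normrZ normfV normr_id mulVf //.
by rewrite normr_eq0.
Qed.

Lemma pow2_big (c : R) : exists k : nat, c <= 2 ^+ k.
Proof.
exists (Num.Def.trunc `|c|).+1.
apply: (le_trans (ler_norm c)); apply: ltW.
apply: (lt_le_trans (truncnS_gt _)).
rewrite -natrX ler_nat; apply: ltnW; exact: ltn_expl.
Qed.

Lemma exp_unbounded (f finv : V -> V) (hK : cancel f finv) (hK' : cancel finv f)
  (hf : forall (a : R) x, f (a *: x) = a *: f x)
  (hfi : forall (a : R) x, finv (a *: x) = a *: finv x)
  (hE : expansive f finv) x : x != 0 ->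
  forall k : nat, exists n, 2 ^+ k * `|x| <= `|zpow f finv n x|.
Proof.
move=> x0; elim=> [|k [n Hn]]; first by exists 0; rewrite expr0 mul1r.
set u := zpow f finv n x in Hn.
have u0 : u != 0.
  rewrite -normr_eq0 gt_eqF //; apply: lt_le_trans Hn.
  by rewrite mulr_gt0 ?exprn_gt0 ?normr_gt0.
have [m Hm] := hE _ (@unit_scale u u0).
exists (m + n); rewrite zpow_add // -/u.
rewrite zpow_scale // normrZ normfV normr_id in Hm.
have up : 0 < `|u| by rewrite normr_gt0.
rewrite -ler_pdivrMl ?invr_gt0 // invrK in Hm.
apply: le_trans Hm; rewrite exprS -mulrA mulrC ler_pM2r //.
Qed.

Lemma unif_dir (A B : V -> V) (hAB : cancel A B)
  (H : forall u, u != 0 -> 2 * `|u| <= `|A u| \/ 2 * `|u| <= `|B u|) z :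
  z != 0 -> 2 * `|z| <= `|A z| -> forall j, 2 ^+ j * `|z| <= `|iter j A z|.
Proof.
move=> z0 hz.
have inv : forall j, iter j A z != 0 /\ 2 * `|iter j A z| <= `|A (iter j A z)|.
  elim=> [|j [w0 hw]] //=.
  set w := iter j A z in w0 hw *.
  have wp : 0 < `|w| by rewrite normr_gt0.
  have u0 : A w != 0.
    by rewrite -normr_eq0 gt_eqF //; apply: lt_le_trans hw; lra.
  split => //.
  case: (H _ u0) => // hB; rewrite hAB in hB.
  exfalso; lra.
elim=> [|j IH]; first by rewrite expr0 mul1r.
have [_ h] := inv j.
by rewrite exprS -mulrA /=; apply: le_trans h; rewrite ler_pM2l.
Qed.

Lemma unif_nonunit (A B : V -> V)
  (hA : forall (a : R) x, A (a *: x) = a *: A x)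
  (hB : forall (a : R) x, B (a *: x) = a *: B x)
  (H : forall u, `|u| = 1 -> 2 <= `|A u| \/ 2 <= `|B u|) u :
  u != 0 -> 2 * `|u| <= `|A u| \/ 2 * `|u| <= `|B u|.
Proof.
move=> u0; have up : 0 < `|u| by rewrite normr_gt0.
have := H _ (@unit_scale u u0); rewrite hA hB !normrZ normfV normr_id.
by rewrite -!ler_pdivrMl ?invr_gt0 // !invrK mulrC.
Qed.
End Scale.
Arguments exp_unbounded {R V f finv}.
Arguments unif_dir {R V A B}.
Arguments unif_nonunit {R V A B}.
Arguments iter_scale {R V g}.
Arguments inv_scale {R V S Sinv}.
Arguments unit_scale {R V x}.


Lemma iter_cancel (V : Type) (f g : V -> V) (h : cancel f g) n : cancel (iter n f) (iter n g).
Proof. elim: n => [|n IH] x //; by rewrite iterSr iterS h IH. Qed.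

Lemma final_ineq (R : realType) (a b c L : R) : 1 <= L -> 0 < a -> a * b <= L * c ->
  1 <= L * b -> 2 * L ^+ 2 <= a -> 2 <= c.
Proof.
move=> L1 a0 h1 h2 h3.
have h4 : a <= a * (L * b) by rewrite -{1}(mulr1 a) ler_pM2l.
have h5 : a * (L * b) <= L * (L * c) by rewrite mulrCA ler_pM2l //; lra.
have : 2 * L ^+ 2 <= L ^+ 2 * c by rewrite expr2 -mulrA; lra.
rewrite mulrC ler_pM2l //; rewrite exprn_gt0 //; lra.
Qed.

Arguments final_ineq {R a b c L}.

Lemma part23 (R : realType) (X Y : normedModType R)
  (S : {linear X -> X}) (Sinv : X -> X) (T : {linear Y -> Y}) (Tinv : Y -> Y)
  (Pi : {linear X -> Y})
  (hSK : cancel S Sinv) (hSK' : cancel Sinv S)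
  (hTK : cancel T Tinv) (hTK' : cancel Tinv T) :
  (strong_bounded_selector S Sinv T Tinv Pi ->
     (expansive S Sinv -> expansive T Tinv) /\
     (unif_expansive S Sinv -> unif_expansive T Tinv)).
Proof.
move=> [L [L1 hsel]].
have hSs : forall (a : R) v, S (a *: v) = a *: S v by move=> a v; rewrite linearZ.
have hSis : forall (a : R) v, Sinv (a *: v) = a *: Sinv v by move=> a v; apply: inv_scale.
have L0 : 0 < L by lra.
have sel y : `|y| = 1 -> exists x, x != 0 /\ 1 <= L * `|x| /\
    forall n : int, `|zpow S Sinv n x| <= L * `|zpow T Tinv n y|.
  move=> y1; have [x [Pxy hx]] := hsel y; exists x; split; last split.
  - apply/eqP => x0; move: y1; rewrite -Pxy x0 linear0 normr0 => /eqP.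
    by rewrite eq_sym oner_eq0.
  - by have [_ ] := hx 0; rewrite /= y1.
  - by move=> n; have [] := hx n.
split.
- move=> hE y y1; have [x [x0 [hL hx]]] := sel y y1.
  have [k hk] := pow2_big _ (2 * L / `|x|).
  have [n hn] := exp_unbounded hSK hSK' hSs hSis hE x x0 k.
  exists n; have := le_trans hn (hx n).
  have xp : 0 < `|x| by rewrite normr_gt0.
  rewrite ler_pdivrMr // in hk.
  move=> h; have : 2 * L <= L * `|zpow T Tinv n y| by apply: le_trans h.
  by rewrite mulrC ler_pM2l.
- move=> [N hN].
  set A := iter N S; set B := iter N Sinv.
  have hAB : cancel A B by apply: iter_cancel.
  have hBA : cancel B A by apply: iter_cancel.
  have hAs : forall (a : R) v, A (a *: v) = a *: A v by move=> *; apply: iter_scale.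
  have hBs : forall (a : R) v, B (a *: v) = a *: B v by move=> *; apply: iter_scale.
  have Hnu := unif_nonunit hAs hBs hN.
  have Hnu' : forall u, u != 0 -> 2 * `|u| <= `|B u| \/ 2 * `|u| <= `|A u|.
    by move=> u u0; case: (Hnu u u0); [right|left].
  have [k hk] := pow2_big _ (2 * L ^+ 2).
  exists (k * N)%N => y y1; have [x [x0 [hL hx]]] := sel y y1.
  have xp : 0 < `|x| by rewrite normr_gt0.
  have kp : 0 < 2 ^+ k :> R by rewrite exprn_gt0.
  case: (Hnu x x0) => h.
  + left; have := unif_dir hAB Hnu x x0 h k; rewrite -iterM => h1.
    have h2 := le_trans h1 (hx (Posz (k * N)%N)); rewrite /= in h2.
    exact: (final_ineq L1 kp h2 hL hk).
  + right; have := unif_dir hBA Hnu' x x0 h k; rewrite -iterM => h1.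
    have := hx (- Posz (k * N)%N); rewrite !zpowN // => h3.
    have h2 := le_trans h1 h3.
    exact: (final_ineq L1 kp h2 hL hk).
Qed.
Lemma zmod_e (V : zmodType) (a b p q : V) : (a - (p + q)) - (b - p) = (a - b) - q.
Proof. by rewrite opprD opprB !addrA [a - p - q + p]addrAC subrK addrAC. Qed.

Section OMT.
Variables (R : realType) (X Y : completeNormedModType R) (Pi : {linear X -> Y}).
Hypothesis (hPi : continuous Pi) (surj : forall y, exists x, Pi x = y).

Let A (n : nat) : set Y := Pi @` [set x : X | `|x| <= n%:R].

Lemma omt_baire : exists n : nat, exists y0 : Y, exists r : R, 0 < r /\
  ball y0 r `<=` closure (A n).
Proof.
apply: contrapT => H.
pose F n := ~` closure (A n).
have oF n : open (F n) by apply: closed_openC; exact: closed_closure.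
have dF n : dense (F n).
  move=> O [y Oy] oO.
  apply: contrapT => HO; apply: H; exists n.
  have /nbhs_ballP [r r0 hr] : nbhs y O by apply: open_nbhs_nbhs.
  exists y, r; split => // z bz; apply: contrapT => nz.
  by apply: HO; exists z; split => //; apply: hr.
have := @Baire R Y F (fun i => conj (oF i) (dF i)) setT.
case.
- by exists 0.
- exact: openT.
move=> z [_ hz].
have [x Px] := surj z.
apply: (hz (Num.Def.trunc `|x|).+1 Logic.I).
apply: subset_closure; exists x => //=.
exact/ltW/truncnS_gt.
Qed.

Lemma closure_pt (p : Y) (n : nat) (e : R) : closure (A n) p -> 0 < e ->
  exists x : X, `|x| <= n%:R /\ `|p - Pi x| < e.
Proof.
move=> cp e0; have [w [[x hx <-] hb]] := cp _ (nbhsx_ballx p e e0).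
by exists x; split => //; move: hb; rewrite -ball_normE.
Qed.

Lemma omt_approx : exists M : R, 0 < M /\ forall y : Y, exists x : X,
  `|x| <= M * `|y| /\ `|Pi x - y| <= `|y| / 2.
Proof.
have [n [y0 [r [r0 hb]]]] := omt_baire.
exists (4 * (n.+1)%:R / r); split; first by rewrite divr_gt0 // mulr_gt0.
move=> y; have [->|y0n] := eqVneq y 0.
  by exists 0; rewrite linear0 subr0 !normr0 mulr0 mul0r.
have ny : 0 < `|y| by rewrite normr_gt0.
set c := r / (2 * `|y|).
have c0 : 0 < c by rewrite divr_gt0 // mulr_gt0.
have hc : c * `|y| = r / 2 by rewrite /c; field; rewrite gt_eqF.
have r8 : 0 < r / 8 by rewrite divr_gt0.
have b1 : ball y0 r (y0 + c *: y).
  by rewrite -ball_normE /ball_ /= opprD addrA subrr sub0r normrN normrZ gtr0_norm // hc; lra.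
have b2 : ball y0 r y0 by apply: ballxx.
have [x1 [h1 d1]] := closure_pt _ _ _ (hb _ b1) r8.
have [x2 [h2 d2]] := closure_pt _ _ _ (hb _ b2) r8.
exists (c^-1 *: (x1 - x2)); split.
  rewrite normrZ normfV gtr0_norm //.
  have : `|x1 - x2| <= 2 * n%:R by apply: (le_trans (ler_normB _ _)); lra.
  have -> : c^-1 = 2 * `|y| / r by rewrite /c invf_div.
  move=> hx; apply: (le_trans (y := 2 * `|y| / r * (2 * n%:R))).
    by rewrite ler_pM2l // divr_gt0 // mulr_gt0.
  rewrite -subr_ge0.
  have -> : 4 * n.+1%:R / r * `|y| - 2 * `|y| / r * (2 * n%:R) = 4 * `|y| / r.
    by rewrite -addn1 natrD; field; rewrite gt_eqF.
  by apply: divr_ge0; [apply: mulr_ge0|apply: ltW].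
have -> : Pi (c^-1 *: (x1 - x2)) - y =
    c^-1 *: ((Pi x1 - (y0 + c *: y)) - (Pi x2 - y0)).
  rewrite zmod_e linearZ linearB /= [in RHS]scalerBr [in RHS]scalerBr scalerA mulVf ?gt_eqF // scale1r.
  by rewrite scalerBr.
rewrite normrZ normfV gtr0_norm //.
have : `|(Pi x1 - (y0 + c *: y)) - (Pi x2 - y0)| <= r / 4.
  apply: (le_trans (ler_normB _ _)).
  rewrite distrC [`|Pi x2 - _|]distrC; lra.
have -> : c^-1 = 2 * `|y| / r by rewrite /c invf_div.
move=> h; apply: (le_trans (y := 2 * `|y| / r * (r / 4))).
  by rewrite ler_pM2l // divr_gt0 // mulr_gt0.
have -> : 2 * `|y| / r * (r / 4) = `|y| / 2 by field; rewrite gt_eqF.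
by [].
Qed.

Lemma omt_lift : exists C : R, 0 < C /\ forall y : Y, exists x : X,
  Pi x = y /\ `|x| <= C * `|y|.
Proof.
have [M [M0 hM]] := omt_approx.
have [g hg] := choice hM.
exists (M * 2); split; first by rewrite mulr_gt0.
move=> y.
pose r k := iter k (fun v => v - Pi (g v)) y.
pose u k := g (r k).
have hr k : `|r k| <= `|y| * 2^-1 ^+ k.
  elim: k => [|k IH]; first by rewrite expr0 mulr1.
  rewrite /r iterS -/(r k) distrC exprS mulrCA.
  apply: (le_trans (proj2 (hg (r k)))).
  by rewrite mulrC ler_pM2l // invr_gt0.
have hu k : `|u k| <= geometric (M * `|y|) 2^-1 k.
  rewrite /geometric /= -mulrA; apply: (le_trans (proj1 (hg (r k)))).
  by rewrite ler_pM2l.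
have hz : `|(2^-1 : R)| < 1 by rewrite ger0_norm ?invr_ge0 // invf_lt1 // ltr1n.
have cg := @is_cvg_geometric_series _ (M * `|y|) _ hz.
have cn : cvgn [normed series u].
  apply: (series_le_cvg _ _ hu cg) => n //.
  by rewrite /geometric /= mulr_ge0 // ?mulr_ge0 // ?exprn_ge0 // ?invr_ge0 // ltW.
have cs := normed_cvg cn.
exists (limn (series u)); split.
- have hPs n : Pi (series u n) = y - r n.
    elim: n => [|n IH]; first by rewrite /series /= big_geq // linear0 subrr.
    rewrite seriesSr linearD IH /u /r iterS -/(r n) opprB addrA.
    by rewrite addrAC.
  have c1 : (Pi \o series u) @ \oo --> Pi (limn (series u)).
    by apply: continuous_cvg; [exact: hPi | exact: cs].
  have c2 : (Pi \o series u) @ \oo --> y.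
    have -> : Pi \o series u = (fun n => y - r n) by apply: funext => n /=; exact: hPs.
    have {2}-> : y = y - 0 by rewrite subr0.
    apply: cvgB; first exact: cvg_cst.
    apply: norm_cvg0.
    apply: (@squeeze_cvgr _ _ _ _ (fun _ => 0) (geometric `|y| 2^-1)).
    - by apply: nearW => n /=; rewrite normr_ge0 /=; apply: hr.
    - exact: cvg_cst.
    - exact: cvg_geometric.
  exact: (cvg_unique _ c1 c2).
- have h0 := lim_series_norm cn.
  apply: (le_trans h0).
  have -> : M * 2 * `|y| = limn (series (geometric (M * `|y|) 2^-1)).
    have -> : M * 2 * `|y| = M * `|y| * (1 - 2^-1)^-1.
      by field.
    by apply/esym/cvg_lim => //; apply: cvg_geometric_series.
  apply: ler_lim => //; apply: nearW => n /=.
  by apply: ler_sum => k _; apply: hu.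
Qed.
End OMT.

Lemma linear_bound (R : realType) (X Y : normedModType R) (Pi : {linear X -> Y})
  (hPi : continuous Pi) : exists P : R, 0 < P /\ forall x, `|Pi x| <= P * `|x|.
Proof.
have /linear_boundedP H := (linear_bounded_continuous Pi).2 hPi.
case: H => M [_ HM]; exists (`|M| + 1); split.
  by apply: (le_lt_trans (normr_ge0 M)); rewrite ltrDl.
apply: HM; apply: (le_lt_trans (ler_norm M)); rewrite ltrDl //.
Qed.

Lemma part1 (R : realType) (X Y : completeNormedModType R)
  (S : {linear X -> X}) (T : {linear Y -> Y}) (Pi : {linear X -> Y})
  (hPi : continuous Pi) (hPisurj : forall y : Y, exists x : X, Pi x = y)
  (hcomm : forall x : X, Pi (S x) = T (Pi x)) :
  shadowing S -> shadowing T.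
Proof.
move=> [K [K0 hK]].
have [C [C0 hC]] := omt_lift _ _ _ _ hPi hPisurj.
have [P [P0 hP]] := linear_bound _ _ _ _ hPi.
have [g hg] := choice hC.
exists (P * K * C); split; first by rewrite !mulr_gt0.
move=> z zb.
set Z := sup (range (fun n => `|z n|)).
have hz n : `|z n| <= Z by apply: ub_le_sup => //; exists n.
pose w n := g (z n).
have hw n : `|w n| <= C * Z.
  by apply: (le_trans (proj2 (hg (z n)))); rewrite ler_pM2l.
have wb : has_ubound (range (fun n => `|w n|)) by exists (C * Z) => _ [n _ <-].
have [yX [yXb [yXs yXr]]] := hK w wb.
set W := sup (range (fun n => `|w n|)) in yXs.
set YX := sup (range (fun n => `|yX n|)) in yXs.
have hyX n : `|yX n| <= YX by apply: ub_le_sup => //; exists n.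
have hW : W <= C * Z by apply: ge_sup; [exists `|w 0|, 0 | move=> _ [n _ <-]].
exists (fun n => Pi (yX n)); split; last split.
- by exists (P * YX) => _ [n _ <-]; apply: (le_trans (hP _)); rewrite ler_pM2l.
- apply: ge_sup; first by exists `|Pi (yX 0)|, 0.
  move=> _ [n _ <-]; apply: (le_trans (hP _)).
  rewrite -!mulrA ler_pM2l //; apply: (le_trans (hyX n)).
  apply: (le_trans yXs); rewrite ler_pM2l //.
- by move=> n; rewrite yXr linearD hcomm (proj1 (hg (z n))).
Qed.

Theorem lemma3p2 (R : realType) (X Y : completeNormedModType R)
  (S : {linear X -> X}) (Sinv : X -> X) (T : {linear Y -> Y}) (Tinv : Y -> Y)
  (Pi : {linear X -> Y})
  (hX : separable X) (hY : separable Y)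
  (hS : continuous S) (hSinv : continuous Sinv)
  (hSK : cancel S Sinv) (hSK' : cancel Sinv S)
  (hT : continuous T) (hTinv : continuous Tinv)
  (hTK : cancel T Tinv) (hTK' : cancel Tinv T)
  (hPi : continuous Pi) (hPisurj : forall y : Y, exists x : X, Pi x = y)
  (hcomm : forall x : X, Pi (S x) = T (Pi x)) :
  (shadowing S -> shadowing T) /\
  (strong_bounded_selector S Sinv T Tinv Pi ->
     (expansive S Sinv -> expansive T Tinv) /\
     (unif_expansive S Sinv -> unif_expansive T Tinv)).
Proof.
split.
- exact: part1 hPi hPisurj hcomm.
- exact: part23 hSK hSK' hTK hTK'.
Qed.
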